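(* Let $\mathcal{A}$ be a Banach algebra such that $\mathrm{rad}(\mathcal{A})=\mathrm{rann}(\mathcal{A})$ and $\mathcal{A}/\mathrm{rad}(\mathcal{A})$ is commutative, and suppose $\mathcal{A}$ has a right identity. Let $(\delta,d)$ be a generalized derivation of $\mathcal{A}$. Then the following are equivalent: (i) $\delta$ is skew centralizing; (ii) for every $k\in\mathbb{N}$, $\delta$ is $k$-skew centralizing; (iii) there exists $k\in\mathbb{N}$ such that $\delta$ is $k$-skew centralizing.
   Context: $\mathrm{rad}(\mathcal{A})$ is the Jacobson radical and $\mathrm{rann}(\mathcal{A})=\{c\in\mathcal{A}: ac=0\ \forall a\in\mathcal{A}\}$. A derivation is a linear map $d$ with $d(ab)=d(a)b+ad(b)$; a generalized derivation $(\delta,d)$ consists of a derivation $d$ and linear $\delta$ with $\delta(ab)=a\delta(b)+d(a)b$. $Z(\mathcal{A})$ is the center; $\langle a,b\rangle=ab+ba$. $T$ is $k$-skew centralizing if $\langle T(a),a^k\rangle\in Z(\mathcal{A})$ for all $a$; skew centralizing means $1$-skew centralizing. *)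

(* Defs.v *)
From mathcomp Require Import all_boot all_algebra.
From mathcomp Require Import complex.
From mathcomp Require Import all_classical all_reals all_analysis.
Set Implicit Arguments.
Unset Strict Implicit.
Unset Printing Implicit Defensive.
Import GRing.Theory Num.Theory.
Local Open Scope ring_scope.

Section BanachAlgebra.
Variables (K : numFieldType) (V : normedModType K) (mul : V -> V -> V).

(* Banach algebra axioms: associative, K-bilinear multiplication with a
   submultiplicative norm.  Completeness of V is imposed by taking
   V : completeNormedModType in the theorem. *)
Definition banach_algebra_mul : Prop :=
  (forall x y z, mul (mul x y) z = mul x (mul y z)) /\
  (forall x y z, mul (x + y) z = mul x z + mul y z) /\
  (forall x y z, mul x (y + z) = mul x y + mul x z) /\
  (forall (c : K) x y, mul (c *: x) y = c *: mul x y) /\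
  (forall (c : K) x y, mul x (c *: y) = c *: mul x y) /\
  (forall x y, `|mul x y| <= `|x| * `|y|).

(* left quasi-regularity: x has a left quasi-inverse c, i.e. c o x = 0 where
   c o x = c + x - c x. *)
Definition left_quasi_regular (x : V) : Prop :=
  exists c : V, c + x - mul c x = 0.

(* Jacobson radical (Jacobson's characterisation for non-unital algebras):
   rad(A) = { a | for all b, b a is left quasi-regular }. *)
Definition jacobson_rad : set V :=
  [set a | forall b : V, left_quasi_regular (mul b a)].

Definition rann : set V := [set c | forall a : V, mul a c = 0].

Definition center : set V := [set z | forall a : V, mul z a = mul a z].

(* A / rad(A) commutative: ab - ba in rad(A) for all a, b. *)
Definition quotient_rad_commutative : Prop :=
  forall a b : V, jacobson_rad (mul a b - mul b a).

Definition has_right_identity : Prop :=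
  exists e : V, forall a : V, mul a e = a.

Definition derivation (d : V -> V) : Prop :=
  linear d /\ forall a b, d (mul a b) = mul (d a) b + mul a (d b).

Definition generalized_derivation (delta d : V -> V) : Prop :=
  derivation d /\ linear delta /\
  forall a b, delta (mul a b) = mul a (delta b) + mul (d a) b.

Definition anticomm (a b : V) : V := mul a b + mul b a.

(* apow a n = a^(n+1) (the algebra need not be unital, so a^0 is avoided) *)
Fixpoint apow (a : V) (n : nat) : V :=
  match n with
  | 0 => a
  | n'.+1 => mul (apow a n') a
  end.

(* T is k-skew centralizing (k >= 1): <T(a), a^k> in Z(A) for all a. *)
Definition k_skew_centralizing (T : V -> V) (k : nat) : Prop :=
  forall a : V, center (anticomm (T a) (apow a k.-1)).

Definition skew_centralizing (T : V -> V) : Prop := k_skew_centralizing T 1.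

End BanachAlgebra.

(* Main.v *)
Require Import Defs.
From mathcomp Require Import all_boot all_algebra.
From mathcomp Require Import complex.
From mathcomp Require Import all_classical all_reals all_analysis.
Import GRing.Theory Num.Theory.
Local Open Scope ring_scope.
Local Open Scope complex_scope.
Set Implicit Arguments.
Unset Strict Implicit.

Fixpoint hpoly {K : numFieldType} {V : lmodType K} (n : nat) (f : K -> V) (l : V) : Prop :=
  match n with
  | 0 => forall t, f t = l
  | n'.+1 => exists c0 (g : K -> V), @hpoly K V n' g l /\ forall t, f t = c0 + t *: g t
  end.

Lemma hpoly_ext (K : numFieldType) (V : lmodType K) n (f g : K -> V) l :
  (forall t, f t = g t) -> hpoly n f l -> hpoly n g l.
Proof.
case: n => [|n] /= E.
  by move=> H t; rewrite -E H.
by move=> [c0 [h [Hh Hf]]]; exists c0, h; split => // t; rewrite -E Hf.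
Qed.

Lemma hpoly_raise (K : numFieldType) (V : lmodType K) n (f : K -> V) l :
  hpoly n f l -> hpoly n.+1 f 0.
Proof.
elim: n f l => [|n IH] f l /=.
  by move=> H; exists l, (fun _ => 0); split => // t; rewrite H scaler0 addr0.
move=> [c0 [g [Hg Hf]]]; exists c0, g; split => //; exact: IH Hg.
Qed.

Lemma hpoly_add (K : numFieldType) (V : lmodType K) n (f g : K -> V) l1 l2 :
  hpoly n f l1 -> hpoly n g l2 -> hpoly n (fun t => f t + g t) (l1 + l2).
Proof.
elim: n f g l1 l2 => [|n IH] f g l1 l2 /=.
  by move=> H1 H2 t; rewrite H1 H2.
move=> [c0 [f' [Hf' Hf]]] [c1 [g' [Hg' Hg]]].
exists (c0 + c1), (fun t => f' t + g' t); split; first exact: IH.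
by move=> t; rewrite Hf Hg scalerDr addrACA.
Qed.

Lemma hpoly_addc (K : numFieldType) (V : lmodType K) n (c : V) (f : K -> V) l :
  hpoly n.+1 f l -> hpoly n.+1 (fun t => c + f t) l.
Proof.
move=> [c0 [g [Hg Hf]]]; exists (c + c0), g; split => // t.
by rewrite Hf addrA.
Qed.

Lemma hpoly_mulX (K : numFieldType) (V : lmodType K) n (f : K -> V) l :
  hpoly n f l -> hpoly n.+1 (fun t => t *: f t) l.
Proof. by move=> H; exists 0, f; split => // t; rewrite add0r. Qed.

Lemma hpoly_shift (K : numFieldType) (V : lmodType K) n (f : K -> V) l :
  hpoly n f l -> hpoly n (fun t => f (t + 1)) l.
Proof.
elim: n f l => [|n IH] f l.
  by move=> /= H t; rewrite H.
move=> [c0 [g [Hg Hf]]].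
have H1 := hpoly_mulX (IH _ _ Hg).
have H2 := hpoly_raise (IH _ _ Hg).
have H3 := hpoly_addc c0 (hpoly_add H1 H2).
rewrite addr0 in H3.
apply: hpoly_ext H3 => t.
by rewrite Hf scalerDl scale1r.
Qed.

Lemma hpoly_diff (K : numFieldType) (V : lmodType K) n (f : K -> V) l :
  hpoly n.+1 f l -> hpoly n (fun t => f (t + 1) - f t) (l *+ n.+1).
Proof.
elim: n f l => [|n IH] f l.
  move=> [c0 [g [Hg Hf]]] t /=.
  rewrite !Hf !Hg scalerDl scale1r.
  by rewrite opprD addrACA subrr add0r addrAC subrr add0r.
move=> [c0 [g [Hg Hf]]].
have H1 := hpoly_mulX (IH _ _ Hg).
have H2 := @hpoly_shift _ _ n.+1 g l Hg.
have H3 := hpoly_add H2 H1.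
rewrite -mulrS in H3.
apply: hpoly_ext H3 => t.
rewrite !Hf scalerDl scale1r scalerBr.
rewrite opprD addrACA subrr add0r.
by rewrite [in RHS](addrC (t *: g (t + 1))) -addrA.
Qed.

Lemma hpoly_lead (K : numFieldType) (V : lmodType K) (P : V -> Prop) n (f : K -> V) l :
  (forall x y, P x -> P y -> P (x - y)) ->
  (forall (c : K) x, P x -> P (c *: x)) ->
  hpoly n f l -> (forall t, P (f t)) -> P l.
Proof.
move=> PB PZ.
elim: n f l => [|n IH] f l.
  by move=> /= H HP; rewrite -(H 0).
move=> H HP.
have := IH _ _ (hpoly_diff H) (fun t => PB _ _ (HP (t + 1)) (HP t)).
move=> /(PZ (n.+1%:R)^-1).
by rewrite -scaler_nat scalerA mulVf ?pnatr_eq0 // scale1r.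
Qed.

Lemma hpoly_step (K : numFieldType) (V : lmodType K) (M : V -> V) n (h : K -> V) l :
  (forall x y, M (x + y) = M x + M y) ->
  (forall (c : K) x, M (c *: x) = c *: M x) ->
  hpoly n h l -> hpoly n.+1 (fun t => M (h t) + t *: h t) l.
Proof.
move=> MD MZ.
elim: n h l => [|n IH] h l.
  by move=> /= H; exists (M l), (fun _ => l); split => // t; rewrite H.
move=> [c0 [g [Hg Hf]]].
exists (M c0), (fun t => c0 + (M (g t) + t *: g t)); split.
  exact: hpoly_addc (IH _ _ Hg).
move=> t; rewrite Hf MD MZ -addrA; congr (_ + _).
by rewrite !scalerDr addrCA.
Qed.

Fixpoint pw (V : Type) (mul : V -> V -> V) (x a : V) (j : nat) : V :=
  match j with 0 => x | j'.+1 => mul (pw mul x a j') a end.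

Lemma hpoly_iter (K : numFieldType) (V : lmodType K) (mul : V -> V -> V) (a e : V)
   n j (h : K -> V) l :
  (forall x y z, mul (x + y) z = mul x z + mul y z) ->
  (forall (c : K) x y, mul (c *: x) y = c *: mul x y) ->
  (forall x y z, mul x (y + z) = mul x y + mul x z) ->
  (forall (c : K) x y, mul x (c *: y) = c *: mul x y) ->
  (forall x, mul x e = x) ->
  hpoly n h l -> hpoly (j + n) (fun t => pw mul (h t) (a + t *: e) j) l.
Proof.
move=> mDl mZl mDr mZr eR H.
elim: j => [|j IH] //=.
have := hpoly_step (M := fun x => mul x a) (fun x y => mDl x y a)
  (fun c x => mZl c x a) IH.
apply: hpoly_ext => t.
by rewrite mDr mZr eR.
Qed.

Unset Implicit Arguments.

Theorem corollary5p3 (R : realType) (V : completeNormedModType R[i])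
  (mul : V -> V -> V) (delta d : V -> V) :
  banach_algebra_mul mul ->
  (forall x : V, jacobson_rad mul x <-> rann mul x) ->
  quotient_rad_commutative mul ->
  has_right_identity mul ->
  generalized_derivation mul delta d ->
  [/\ (skew_centralizing mul delta ->
         forall k : nat, (0 < k)%N -> k_skew_centralizing mul delta k),
      ((forall k : nat, (0 < k)%N -> k_skew_centralizing mul delta k) ->
         exists2 k : nat, (0 < k)%N & k_skew_centralizing mul delta k)
    & ((exists2 k : nat, (0 < k)%N & k_skew_centralizing mul delta k) ->
         skew_centralizing mul delta)].
Proof.
move=> [mA [mDl [mDr [mZl [mZr _]]]]] Hrad Hcomm [e eR] [[dlin _] [_ Hdel]].
have mNl x y : mul (- x) y = - mul x y by rewrite -scaleN1r mZl scaleN1r.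
have mNr x y : mul x (- y) = - mul x y by rewrite -scaleN1r mZr scaleN1r.
have mBl x y z : mul (x - y) z = mul x z - mul y z by rewrite mDl mNl.
have mBr x y z : mul x (y - z) = mul x y - mul x z by rewrite mDr mNr.
have comm c x y : mul c (mul x y) = mul c (mul y x).
  have := (Hrad _).1 (Hcomm x y) c.
  by rewrite mBr => /eqP; rewrite subr_eq0 => /eqP.
have dD x y : d (x + y) = d x + d y by have := dlin 1 x y; rewrite !scale1r.
have d0 : d 0 = 0 by have := dlin (-1) 0 0; rewrite scaleN1r oppr0 addr0 => ->;
  rewrite scaleN1r addNr.
have dZ (c : R[i]) x : d (c *: x) = c *: d x by have := dlin c x 0; rewrite !addr0 d0 addr0.
pose cent z := forall a, mul z a = mul a z.
have centE z : Defs.center mul z <-> cent z by [].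
have centD x y : cent x -> cent y -> cent (x + y).
  by move=> cx cy a; rewrite mDl mDr cx cy.
have centB x y : cent x -> cent y -> cent (x - y).
  by move=> cx cy a; rewrite mBl mBr cx cy.
have centZ (c : R[i]) x : cent x -> cent (c *: x).
  by move=> cx a; rewrite mZl mZr cx.
have centM z y : cent z -> cent (mul z y).
  move=> cz w; rewrite mA comm -mA cz mA; done.
have centpw z a j : cent z -> cent (pw mul z a j).
  by move=> cz; elim: j => [|j IH] //=; apply: centM.
have pwD x y a j : pw mul (x + y) a j = pw mul x a j + pw mul y a j.
  by elim: j => [|j IH] //=; rewrite IH mDl.
have pwB x y a j : pw mul (x - y) a j = pw mul x a j - pw mul y a j.
  by elim: j => [|j IH] //=; rewrite IH mBl.
have antipw x a j : anticomm mul x (apow mul a j) = pw mul (anticomm mul x a) a j.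
  elim: j => [|j IH] //=.
  rewrite -IH /anticomm mDl -mA; congr (_ + _).
  by rewrite !mA comm.
pose s1 a := anticomm mul (delta a) a.
have skewE k : k_skew_centralizing mul delta k <->
    forall a, cent (pw mul (s1 a) a k.-1).
  by split => H a; have := H a; rewrite antipw.
have centSn x n : cent (x *+ n.+1) -> cent x.
  move=> /(centZ (((n.+1)%:R : R[i])^-1)).
  by rewrite -(@scaler_nat R[i] V n.+1 x) scalerA mulVf ?pnatr_eq0 // scale1r.
split.
- move=> H1 k _; apply/skewE => a; apply: centpw.
  by have := (skewE 1%N).1 H1 a.
- by move=> H; exists 1%N => //; apply: H.
move=> [k _ /skewE Hk].
apply/skewE => /=.
set j := k.-1 in Hk.
pose w := delta e.
have Hdx x : delta x = mul x w + d x by rewrite -{1}(eR x) Hdel eR.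
have pwe x i : pw mul x e i = x by elim: i => [|i IH] //=; rewrite IH eR.
have ee : mul e e = e by rewrite eR.
have cz : cent (w + mul e w).
  by have := Hk e; rewrite pwe /s1 /anticomm eR.
have ew : mul e w = w.
  have := cz e; rewrite eR mDr -mA ee.
  by move/addIr => E; rewrite -E.
have cw : cent w by apply: (centSn _ 1%N); rewrite mulr2n -{2}ew.
have cw' : forall a, mul w a = mul a w := cw.
have de0 : d e = 0.
  have h : w = w + d e by rewrite {1}/w Hdx ew.
  by rewrite -(addKr w (d e)) -h addNr.
pose tt a := mul (d a) a + mul a (d a).
pose q a := mul (mul a w) a + mul a (mul a w).
have cq a : cent (q a).
  have E : mul a (mul a w) = mul (mul a w) a by rewrite mA comm.
  rewrite /q E -cw' mA; apply: centD; apply: centM; exact: cw.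
have s1E a : s1 a = q a + tt a.
  by rewrite /s1 /anticomm Hdx mDl mDr addrACA.
have Ht a : cent (pw mul (tt a) a j).
  have -> : tt a = s1 a - q a by rewrite s1E addrC addKr.
  by rewrite pwB; apply: centB; [apply: Hk | apply: centpw].
pose g a := d a + mul e (d a).
have hp := fun n h l => @hpoly_iter _ V mul _ e n j h l mDl mZl mDr mZr eR.
have cg a : cent (g a).
  have H1 : hpoly 1 (fun t : R[i] => tt a + t *: g a) (g a).
    by exists (tt a), (fun _ => g a); split.
  apply: (hpoly_lead centB centZ (hp a _ _ _ H1)) => t.
  have -> : tt a + t *: g a = tt (a + t *: e).
    rewrite /tt dD dZ de0 scaler0 addr0 mDr mDl mZr mZl eR.
    by rewrite /g scalerDr addrACA.
  exact: Ht.
pose r a := mul (a - mul e a) (d a).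
have ttE a : tt a = mul (g a) a + r a.
  have E2 : mul (mul e (d a)) a = mul (mul e a) (d a) by rewrite mA comm -mA.
  rewrite /tt /g /r mDl mBl E2 -addrA; congr (_ + _).
  by rewrite addrC subrK.
have Hr a : cent (pw mul (r a) a j).
  have -> : r a = tt a - mul (g a) a by rewrite ttE addrC addKr.
  by rewrite pwB; apply: centB; [apply: Ht | apply: centpw; apply: centM].
have cr a : cent (r a).
  have H0 : hpoly 0 (fun _ : R[i] => r a) (r a) by [].
  apply: (hpoly_lead centB centZ (hp a _ _ _ H0)) => t.
  have -> : r a = r (a + t *: e).
    by rewrite /r mDr mZr ee dD dZ de0 scaler0 addr0 opprD addrACA subrr addr0.
  exact: Hr.
move=> a; rewrite s1E; apply: (centD) => //.
have := centD _ _ (centM _ a (cg a)) (cr a). by rewrite -ttE.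
Qed.
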